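(* Let $l\ge1$. Let $\mathcal I_e(l)$ (resp. $\mathcal I_o(l)$) denote the set of $l\times l$ diagonal matrices whose diagonal entries are each $1$ or $-1$ and which have an even (resp. odd) number of entries $-1$. Then for every $x\in\mathbb{R}$ and every $l\times l$ matrix $A$, $$\sum_{\overline I\in\mathcal I_e(l)}\det(xI+\overline IA)=2^{l-1}(x^l+\det A),\qquad \sum_{\overline I\in\mathcal I_o(l)}\det(xI+\overline IA)=2^{l-1}(x^l-\det A).$$
   Context: $I$ denotes the $l\times l$ identity matrix. *)

(* Defs.v *)
From mathcomp Require Import all_boot all_order all_algebra.
From mathcomp Require Import reals.
Set Implicit Arguments. Unset Strict Implicit. Unset Printing Implicit Defensive.
Import GRing.Theory Num.Theory.
Local Open Scope ring_scope.

(* Every diagonal matrix with entries in {1,-1} is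
   sign_mx s for exactly one s (the map is injective), so summing over
   s : {ffun 'I_l -> bool} with an even (odd) number of [true] is summing over
   I_e(l) (resp. I_o(l)). *)
Definition sign_mx (R : ringType) (l : nat) (s : {ffun 'I_l -> bool}) : 'M[R]_l :=
  diag_mx (\row_i ((-1) ^+ s i)).

Definition num_neg (l : nat) (s : {ffun 'I_l -> bool}) : nat := #|[set i | s i]|.

(* Main.v *)
Require Import Defs.
From mathcomp Require Import all_boot all_order all_algebra.
From mathcomp Require Import reals.
From mathcomp Require Import ring.
From mathcomp Require Import fingroup perm.
Import GRing.Theory Num.Theory.
Local Open Scope ring_scope.

Lemma sum_ffun_prod (R : comNzRingType) (l : nat) (F : 'I_l -> bool -> R) :
  \sum_(s : {ffun 'I_l -> bool}) \prod_i F i (s i) = \prod_i (F i true + F i false).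
Proof.
rewrite -bigA_distr_bigA.
by apply: eq_bigr => i _; rewrite big_bool.
Qed.

Lemma entryE (R : comNzRingType) l (x : R) (A : 'M[R]_l) s i j :
  (x%:M + sign_mx R s *m A) i j = (x%:M : 'M[R]_l) i j + (-1) ^+ s i * A i j.
Proof. by rewrite /sign_mx mul_diag_mx !mxE. Qed.

Lemma sign_num_neg (R : comNzRingType) l (s : {ffun 'I_l -> bool}) :
  (-1) ^+ num_neg s = \prod_i ((-1) ^+ s i : R).
Proof.
rewrite /num_neg -prodr_const (big_mkcond (fun i => i \in [set i | s i])) /=.
by apply: eq_bigr => i _; rewrite inE; case: (s i).
Qed.

Lemma S0 (R : comNzRingType) l (x : R) (A : 'M[R]_l) :
  \sum_(s : {ffun 'I_l -> bool}) \det (x%:M + sign_mx R s *m A) = 2 ^+ l * x ^+ l.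
Proof.
rewrite -(det_scalar l x) /determinant exchange_big mulr_sumr /=.
apply: eq_bigr => σ _.
rewrite -mulr_sumr mulrCA; congr (_ * _).
set F := (fun i (b : bool) => (x%:M : 'M[R]_l) i (σ i) + (-1) ^+ b * A i (σ i)).
rewrite (eq_bigr (fun s : {ffun 'I_l -> bool} => \prod_i F i (s i))); last first.
  by move=> s _; apply: eq_bigr => i _; rewrite entryE.
rewrite (@sum_ffun_prod _ _ F) /F.
have -> : (2:R) ^+ l = \prod_(i < l) 2 by rewrite prodr_const card_ord.
rewrite -big_split /=.
by apply: eq_bigr => i _; rewrite /= expr1 expr0; ring.
Qed.

Lemma S1 (R : comNzRingType) l (x : R) (A : 'M[R]_l) :
  \sum_(s : {ffun 'I_l -> bool}) (-1) ^+ num_neg s * \det (x%:M + sign_mx R s *m A)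
  = 2 ^+ l * \det A.
Proof.
rewrite /determinant mulr_sumr.
under eq_bigr => s _ do rewrite mulr_sumr.
rewrite exchange_big /=.
apply: eq_bigr => σ _.
under eq_bigr => s _ do rewrite mulrCA sign_num_neg -big_split /=.
rewrite -mulr_sumr mulrCA; congr (_ * _).
set F := (fun i (b : bool) => (-1) ^+ b * ((x%:M : 'M[R]_l) i (σ i) + (-1) ^+ b * A i (σ i))).
rewrite (eq_bigr (fun s : {ffun 'I_l -> bool} => \prod_i F i (s i))); last first.
  by move=> s _; apply: eq_bigr => i _; rewrite entryE.
rewrite (@sum_ffun_prod _ _ F) /F.
have -> : (2:R) ^+ l = \prod_(i < l) 2 by rewrite prodr_const card_ord.
rewrite -big_split /=.
by apply: eq_bigr => i _; rewrite /= expr1 expr0; ring.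
Qed.

Theorem lemma2p1 (R : realType) (l : nat) (hl : (1 <= l)%N) (x : R) (A : 'M[R]_l) :
  \sum_(s : {ffun 'I_l -> bool} | ~~ odd (num_neg s))
      \det (x%:M + sign_mx R s *m A) = 2 ^+ l.-1 * (x ^+ l + \det A)
  /\
  \sum_(s : {ffun 'I_l -> bool} | odd (num_neg s))
      \det (x%:M + sign_mx R s *m A) = 2 ^+ l.-1 * (x ^+ l - \det A).
Proof.
have h0 := @S0 R l x A.
have h1 := @S1 R l x A.
rewrite (bigID (fun s => odd (num_neg s))) /= in h0.
rewrite (bigID (fun s => odd (num_neg s))) /= in h1.
rewrite (eq_bigr (fun s => - \det (x%:M + sign_mx R s *m A))) in h1; last first.
  by move=> s hs; rewrite -signr_odd hs expr1 mulN1r.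
rewrite [X in _ + X](eq_bigr (fun s => \det (x%:M + sign_mx R s *m A))) in h1; last first.
  by move=> s hs; rewrite -signr_odd (negbTE hs) expr0 mul1r.
rewrite sumrN in h1.
set O := \sum_(s | odd (num_neg s)) _ in h0 h1 *.
set E := \sum_(s | ~~ odd (num_neg s)) _ in h0 h1 *.
case: l hl x A O E h0 h1 => // n _ x A O E h0 h1 /=.
rewrite exprS in h0 h1.
have two0 : (2 : R) != 0 by rewrite pnatr_eq0.
split; apply: (mulfI two0).
- by rewrite mulrA mulrDr -h0 -h1; ring.
- by rewrite mulrA mulrBr -h0 -h1; ring.
Qed.
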